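(* In the setting described in the context, let $\langle s_m, s_{m+1},\ldots,s_{m+L}\rangle$ be a state subsequence, each state constituting one generation $G_1,\ldots,G_L$ of reproducing entities, where (reproduction being without epigenetic development) the size $|G_i|$ of a generation is obtained by enumerating the reproduction instances $(p,c)$ with $p\in E_s$, $c\in E_{s+1}$, $(p,c)\in C$, $(p,c)\in\Delta$ and no $e''\in E_s$ with $(e'',c)\in R$. Given the sets of entities in each state, the worst-case number of steps (RAM model) to observe fecundity, i.e. to compute these generation sizes and decide whether for every $i<L$ there is $j>i$ with $|G_j|\ge|G_i|$, is $O\!\left(L2^{2n}\max\{t_c,\ t_\Delta,\ t_{\delta_{mut}},\ L/2^{2n}\}\right)$.
   Context: A run is a sequence of states, each a finite multiset of atomic elements of size $O(n)$. For each state $s$ an observer has fixed a finite set $E_s$ of entities, each a sub-multiset of $s$, tagged so that distinct entities are distinguishable (entities of different states are distinct objects); hence $|E_s|\le 2^n$. Let $E_T$ be the disjoint union of all $E_s$. The observer fixes: a recognition relation $R\subseteq E_T\times E_T$, a partial injective function with $(e,e')\in R$ only if $e\in E_s$, $e'\in E_{s+1}$ for some state $s$ ($s+1$ denoting the next state); a causal relation $C\subseteq E_T\times E_T$ with $(e,e')\in C$ only if $e\in E_s$, $e'\in E_{s+1}$; and a relation $\Delta\subseteq E_T\times E_T$ such that $(e,e')\in\Delta$ implies $e$ lies in an earlier state than $e'$ and $(e,e')\notin R$. Deciding membership of a given pair in $C$, $\Delta$, $R$ takes at most $t_c$, $t_\Delta$, $t_{\delta_{mut}}$ steps respectively. *)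

(* Defs.v *)
From mathcomp Require Import all_boot.
Set Implicit Arguments. Unset Strict Implicit. Unset Printing Implicit Defensive.

(* Setting.  The state subsequence <s_m, ..., s_{m+L}> is indexed by   *)
(* k = 0..L (k stands for s_{m+k}); [E k] lists the entities of the    *)
(* k-th state.  The observer's relations C (causal), Dl (Delta) and R  *)
(* (recognition) are given as boolean oracles on entities.             *)
(* Generation G_i (i = 1..L) consists of the reproduction instances    *)
(* (p,c) with p in E (i-1), c in E i.                                  *)

Section Spec.
Variables (Ent : eqType) (E : nat -> seq Ent) (C Dl R : Ent -> Ent -> bool).

Definition repro_instance (Es : seq Ent) (p c : Ent) : bool :=
  [&& C p c, Dl p c & ~~ has (fun e => R e c) Es].

Definition gen_size (i : nat) : nat :=
  count (fun pc : Ent * Ent => repro_instance (E i.-1) pc.1 pc.2)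
        [seq (p, c) | p <- E i.-1, c <- E i].

Definition fecund (g : nat -> nat) (L : nat) : Prop :=
  forall i, 1 <= i < L -> exists j, i < j <= L /\ g i <= g j.
End Spec.

(* The observation algorithm, with explicit RAM step accounting.       *)
(* Every function returns (result, number of steps).  A query of the  *)
(* oracle C (resp. Dl, R) costs tc (resp. tD, tR) steps; every other   *)
(* elementary operation (loop iteration, test, addition, comparison)  *)
(* costs 1 step.  Loops are executed to completion (worst case).       *)

Section Algo.
Variables (Ent : eqType) (C Dl R : Ent -> Ent -> bool) (tc tD tR : nat).

Fixpoint has_R_pred (Es : seq Ent) (c : Ent) : bool * nat :=
  match Es with
  | [::] => (false, 1)
  | e :: Es' => let: (b, k) := has_R_pred Es' c in (R e c || b, k + tR + 1)
  end.

Fixpoint count_parents (Es : seq Ent) (c : Ent) : nat * nat :=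
  match Es with
  | [::] => (0, 1)
  | p :: Es' =>
      let: (m, k) := count_parents Es' c in
      ((C p c && Dl p c) + m, k + tc + tD + 2)
  end.

Fixpoint gen_size_alg (Es Es' : seq Ent) : nat * nat :=
  match Es' with
  | [::] => (0, 1)
  | c :: Es'' =>
      let: (m, k) := gen_size_alg Es Es'' in
      let: (hr, k1) := has_R_pred Es c in
      let: (cp, k2) := count_parents Es c in
      ((if hr then 0 else cp) + m, k + k1 + k2 + 2)
  end.

Fixpoint gen_sizes_alg (E : nat -> seq Ent) (i l : nat) : seq nat * nat :=
  match l with
  | 0 => ([::], 1)
  | l'.+1 =>
      let: (g, k) := gen_size_alg (E i.-1) (E i) in
      let: (gs, k') := gen_sizes_alg E i.+1 l' in
      (g :: gs, k + k' + 1)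
  end.

Fixpoint exists_ge (x : nat) (s : seq nat) : bool * nat :=
  match s with
  | [::] => (false, 1)
  | y :: s' => let: (b, k) := exists_ge x s' in ((x <= y) || b, k + 2)
  end.

Fixpoint fecund_alg (s : seq nat) : bool * nat :=
  match s with
  | [::] => (true, 1)
  | [:: _] => (true, 1)
  | x :: s' =>
      let: (b1, k1) := exists_ge x s' in
      let: (b2, k2) := fecund_alg s' in
      (b1 && b2, k1 + k2 + 2)
  end.

Definition observe_fecundity (E : nat -> seq Ent) (L : nat)
    : (seq nat * bool) * nat :=
  let: (gs, k1) := gen_sizes_alg E 1 L in
  let: (b, k2) := fecund_alg gs in
  ((gs, b), k1 + k2 + 1).
End Algo.

(* Main.v *)
Require Import Defs.
From mathcomp Require Import all_boot zify.
Set Implicit Arguments. Unset Strict Implicit.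

Section L.
Variables (Ent : eqType) (C Dl R : Ent -> Ent -> bool) (tc tD tR : nat).

Lemma has_R_predE Es c : has_R_pred R tR Es c = (has (fun e => R e c) Es, size Es * (tR+1) + 1).
Proof. elim: Es => //= e Es ->; congr pair; lia. Qed.

Lemma count_parentsE Es c : count_parents C Dl tc tD Es c =
  (count (fun p => C p c && Dl p c) Es, size Es * (tc+tD+2) + 1).
Proof. elim: Es => //= e Es ->; congr pair; lia. Qed.

Lemma gen_size_algE Es Es' : gen_size_alg C Dl R tc tD tR Es Es' =
  (sumn [seq count (fun p => [&& C p c, Dl p c & ~~ has (fun e => R e c) Es]) Es | c <- Es'],
   size Es' * (4 + size Es * (tR + tc + tD + 3)) + 1).
Proof.
elim: Es' => //= c Es' ->; rewrite has_R_predE count_parentsE /=; congr pair; last by lia.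
congr addn; case: has => /=; last by apply: eq_count => p; rewrite andbT.
by elim: Es => //= p Es ->; rewrite !andbF.
Qed.

Lemma exchange_count (A B : Type) (Q : A -> B -> bool) s t :
  sumn [seq count (Q p) t | p <- s] = sumn [seq count (fun p => Q p c) s | c <- t].
Proof.
rewrite !sumnE !big_map.
under eq_bigr do rewrite -sum1_count big_mkcond.
under [RHS]eq_bigr do rewrite -sum1_count big_mkcond.
exact: exchange_big.
Qed.
End L.

Lemma gen_sizeE (Ent : eqType) E (C Dl R : Ent -> Ent -> bool) tc tD tR i :
  gen_size E C Dl R i = (gen_size_alg C Dl R tc tD tR (E i.-1) (E i)).1.
Proof.
rewrite gen_size_algE /= /gen_size count_flatten -map_comp.
rewrite -(exchange_count (fun p c => repro_instance C Dl R (E i.-1) p c)).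
congr sumn; apply: eq_map => p /=; by rewrite count_map.

Qed.



Lemma gen_sizes_algE (Ent : eqType) E (C Dl R : Ent -> Ent -> bool) tc tD tR B i l :
  (forall k, i <= k < i + l -> (gen_size_alg C Dl R tc tD tR (E k.-1) (E k)).2 <= B) ->
  (gen_sizes_alg C Dl R tc tD tR E i l).1 = [seq gen_size E C Dl R k | k <- iota i l] /\
  (gen_sizes_alg C Dl R tc tD tR E i l).2 <= l * (B + 1) + 1.
Proof.
elim: l i => [|l IH] i Hb //=.
case Eg: gen_size_alg => [g k]; case Es: gen_sizes_alg => [gs k'] /=.
have [IH1 IH2] := IH i.+1 (fun k Hk => Hb k ltac:(lia)).
rewrite Es /= in IH1 IH2.
have := Hb i ltac:(lia); rewrite Eg /= => Hk.
split; last by (move: IH2; rewrite /=; lia).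
by rewrite IH1 (gen_sizeE _ _ _ _ tc tD tR) Eg.
Qed.

Lemma exists_geE x s : exists_ge x s = (has (fun y => x <= y) s, 2 * size s + 1).
Proof. elim: s => //= y s ->; congr pair; lia. Qed.

Definition fspec (s : seq nat) : Prop :=
  forall i, i.+1 < size s -> exists j, i < j < size s /\ nth 0 s i <= nth 0 s j.

Lemma fecund_alg_cons x y s : fecund_alg [:: x, y & s] =
  let: (b1, k1) := exists_ge x (y :: s) in
  let: (b2, k2) := fecund_alg (y :: s) in (b1 && b2, k1 + k2 + 2).
Proof. by []. Qed.

Lemma fecund_algE s : ((fecund_alg s).1 <-> fspec s) /\ (fecund_alg s).2 <= 2 * size s * size s + 1.
Proof.
elim: s => [|x s [IH1 IH2]]; first by split => // i.
case: s IH1 IH2 => [|y s] IH1 IH2; first by split => // i.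
rewrite fecund_alg_cons.
case Ee: exists_ge => [b1 k1]; case Ef: (fecund_alg (y :: s)) => [b2 k2].
move: Ee; rewrite exists_geE => -[<- <-]; rewrite Ef /= in IH1 IH2.
split; first last.
  rewrite /=; move: IH2; rewrite /=; lia.
split.
- move=> /andP [Hh Hb2] [|i] Hi /=.
  + have /hasP[z zin xz] : has (fun t => x <= t) (y :: s) by [].
    exists (index z (y :: s)).+1; split; first by (have := index_mem z (y :: s); rewrite zin /=; lia).
    by rewrite /= nth_index.
  + have [j [Hj1 Hj2]] := (IH1.1 Hb2) i Hi.
    by exists j.+1.
- move=> H; apply/andP; split.
  + have [[|j] [Hj1 Hj2]] := H 0 isT; first by [].
    suff : has (fun t => x <= t) (y :: s) by [].
    apply/hasP; exists (nth 0 (y :: s) j) => //; apply: mem_nth; simpl in *; lia.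
  + apply/IH1 => i Hi; have [[|j] [Hj1 Hj2]] := H i.+1 Hi; first by [].
    by exists j.
Qed.

Lemma fspec_iota g L : fspec [seq g k | k <- iota 1 L] <-> fecund g L.
Proof.
have Hn : forall i, i < L -> nth 0 [seq g k | k <- iota 1 L] i = g i.+1.
  by move=> i Hi; rewrite (nth_map 0) ?size_iota // nth_iota // add1n.
rewrite /fspec size_map size_iota; split.
- move=> H i /andP [Hi1 Hi2].
  have [j [Hj1 Hj2]] := H i.-1 ltac:(lia).
  exists j.+1; split; first by lia.
  move: Hj2; rewrite !Hn; try lia.
  by rewrite prednK //; lia.
- move=> H i Hi.
  have [j [Hj1 Hj2]] := H i.+1 ltac:(lia).
  exists j.-1; split; first by lia.
  rewrite !Hn; try lia. by rewrite prednK //; lia.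
Qed.

Lemma bound_gen (a b N T tc tD tR : nat) : a <= N -> b <= N -> 0 < N -> 0 < T ->
  tc <= T -> tD <= T -> tR <= T ->
  b * (4 + a * (tR + tc + tD + 3)) + 1 <= 11 * (N * N * T).
Proof.
move=> Ha Hb HN HT H1 H2 H3.
have Hs : tR + tc + tD + 3 <= 6 * T by lia.
have : b * (4 + a * (tR + tc + tD + 3)) <= N * (4 + N * (6 * T)).
  apply: leq_mul => //; rewrite leq_add2l; exact: leq_mul.
have : 1 <= N * N * T by rewrite !muln_gt0 HN HT.
nia.
Qed.

Theorem theorem6 :
  exists K : nat,
  forall (Ent : eqType) (E : nat -> seq Ent) (C Dl R : Ent -> Ent -> bool)
         (n L tc tD tR : nat),
    0 < L -> 0 < tc -> 0 < tD -> 0 < tR ->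
    (forall k, k <= L -> uniq (E k) /\ size (E k) <= 2 ^ n) ->
    let: ((gs, b), steps) := observe_fecundity C Dl R tc tD tR E L in
    [/\ gs = [seq gen_size E C Dl R i | i <- iota 1 L],
        b <-> fecund (gen_size E C Dl R) L
      & steps <= K * maxn (L * 2 ^ (2 * n) * maxn tc (maxn tD tR)) (L * L)].
Proof.
exists 100 => Ent E C Dl R n L tc tD tR HL Htc HtD HtR HE.
have HN2 : 2 ^ (2 * n) = 2 ^ n * 2 ^ n by by rewrite mulnC expnM expnS expn1.
rewrite HN2.
set N := 2 ^ n. set T := maxn tc (maxn tD tR).
have HN : 0 < N by rewrite expn_gt0.
have HT : 0 < T by lia.
have [Hg1 Hg2] := @gen_sizes_algE Ent E C Dl R tc tD tR (11 * (N * N * T)) 1 L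
  ltac:(move=> k Hk; rewrite gen_size_algE /=;
        apply: bound_gen => //; try lia; [apply: (HE _ _).2 | apply: (HE _ _).2]; lia).
rewrite /observe_fecundity.
case Eg: gen_sizes_alg => [gs k1]; rewrite Eg /= in Hg1 Hg2.
have [Hf1 Hf2] := fecund_algE gs.
case Ef: fecund_alg => [b k2]; rewrite Ef /= in Hf1 Hf2.
have Hsz : size gs = L by rewrite Hg1 size_map size_iota.
rewrite Hsz in Hf2.
split => //.
- by rewrite Hf1 Hg1 fspec_iota.
- have Hm1 : L * (N * N * T) <= maxn (L * N * N * T) (L * L) by rewrite !mulnA leq_maxl.
  have Hm2 : L * L <= maxn (L * N * N * T) (L * L) by rewrite leq_maxr.
  have Hp : L <= L * (N * N * T) by rewrite leq_pmulr // !muln_gt0 HN HT.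
  nia.
Qed.
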